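(* For the modular data of the quantum double of $S_3$, each of the trace two modular invariants $Z_3,Z_{23},Z_{32},Z_{45},Z_{54},Z_{(45)},Z_{(54)}$ has, up to equivalence, exactly one matching nimrep.
   Context: Primaries $0,\dots,7$, all self-conjugate, with $S=\frac16\begin{pmatrix}1&1&2&2&2&2&3&3\\1&1&2&2&2&2&-3&-3\\2&2&4&-2&-2&-2&0&0\\2&2&-2&4&-2&-2&0&0\\2&2&-2&-2&-2&4&0&0\\2&2&-2&-2&4&-2&0&0\\3&-3&0&0&0&0&3&-3\\3&-3&0&0&0&0&-3&3\end{pmatrix}$, fusion coefficients $N_{\lambda\mu}^\nu=\sum_\rho S_{\lambda\rho}S_{\mu\rho}\overline{S_{\nu\rho}}/S_{0\rho}$. Matrices are written as $\sum Z_{\lambda\mu}\chi_\lambda\chi_\mu^*$, and for linear forms $s,t$ in the $\chi$'s, $st^*$ is the matrix of products of coefficients. $Z_3=|\chi_0+\chi_1+\chi_2+\chi_3|^2+\chi_2\chi_3^*+\chi_3\chi_2^*-|\chi_2|^2-|\chi_3|^2$. With $s_2=\chi_0+\chi_1+2\chi_2$, $s_3=\chi_0+\chi_1+2\chi_3$, $s_4=\chi_0+\chi_2+\chi_6$, $s_5=\chi_0+\chi_3+\chi_6$: $Z_{ij}=s_is_j^*$. $Z_{(45)}=(\chi_0+\chi_3)(\chi_0+\chi_2)^*+\chi_1\chi_6^*+\chi_3\chi_6^*+\chi_6\chi_1^*+\chi_6\chi_2^*+|\chi_7|^2$, $Z_{(54)}=Z_{(45)}^t$. A nimrep of dimension $n$: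 non-negative integer $n\times n$ matrices $G_\lambda$ with $G_0=I$, $G_{\bar\lambda}=G_\lambda^t$, $G_\lambda G_\mu=\sum_\nu N_{\lambda\mu}^\nu G_\nu$; nimreps are equivalent if conjugate by a common permutation matrix. $\mathrm{Exp}(Z)$ is the multiset with $Z_{\mu\mu}$ copies of $\mu$. A nimrep matches $Z$ if $n=\mathrm{Tr}\,Z$ and the $G_\lambda$ are simultaneously unitarily diagonalisable with joint eigenvalues $(S_{\lambda\mu}/S_{0\mu})_\lambda$, $\mu$ running through $\mathrm{Exp}(Z)$ with multiplicity. *)

(* Defs.v *)
From mathcomp Require Import all_boot all_order all_algebra all_field.
Set Implicit Arguments. Unset Strict Implicit. Unset Printing Implicit Defensive.
Import Order.TTheory GRing.Theory Num.Theory.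
Local Open Scope ring_scope.

Definition prim := 'I_8.

Definition S_int : seq (seq int) :=
  [:: [:: 1; 1; 2; 2; 2; 2; 3; 3];
      [:: 1; 1; 2; 2; 2; 2; -3; -3];
      [:: 2; 2; 4; -2; -2; -2; 0; 0];
      [:: 2; 2; -2; 4; -2; -2; 0; 0];
      [:: 2; 2; -2; -2; -2; 4; 0; 0];
      [:: 2; 2; -2; -2; 4; -2; 0; 0];
      [:: 3; -3; 0; 0; 0; 0; 3; -3];
      [:: 3; -3; 0; 0; 0; 0; -3; 3]]%R.

Definition Smat : 'M[algC]_8 :=
  \matrix_(i < 8, j < 8) ((nth 0 (nth [::] S_int i) j)%:~R / 6%:R).

Definition Nfus (lam mu nu : prim) : algC :=
  \sum_(rho < 8) Smat lam rho * Smat mu rho * (Smat nu rho)^* / Smat 0 rho.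

(* Linear forms in the characters, as coefficient row vectors. *)
Definition chi (k : nat) : 'rV[int]_8 := delta_mx 0 (@inord 7 k).
(* s t^* : matrix of products of coefficients (coefficients are integers,
   so complex conjugation is trivial). *)
Definition outer (s t : 'rV[int]_8) : 'M[int]_8 := s^T *m t.

Definition Z3 : 'M[int]_8 :=
  outer (chi 0 + chi 1 + chi 2 + chi 3) (chi 0 + chi 1 + chi 2 + chi 3)
  + outer (chi 2) (chi 3) + outer (chi 3) (chi 2)
  - outer (chi 2) (chi 2) - outer (chi 3) (chi 3).

Definition s2 : 'rV[int]_8 := chi 0 + chi 1 + 2%:Z *: chi 2.
Definition s3 : 'rV[int]_8 := chi 0 + chi 1 + 2%:Z *: chi 3.
Definition s4 : 'rV[int]_8 := chi 0 + chi 2 + chi 6.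
Definition s5 : 'rV[int]_8 := chi 0 + chi 3 + chi 6.

Definition Z23 := outer s2 s3.
Definition Z32 := outer s3 s2.
Definition Z45 := outer s4 s5.
Definition Z54 := outer s5 s4.

Definition Z45p : 'M[int]_8 :=
  outer (chi 0 + chi 3) (chi 0 + chi 2) + outer (chi 1) (chi 6)
  + outer (chi 3) (chi 6) + outer (chi 6) (chi 1) + outer (chi 6) (chi 2)
  + outer (chi 7) (chi 7).
Definition Z54p : 'M[int]_8 := Z45p^T.

Definition natmx_C n (A : 'M[nat]_n) : 'M[algC]_n := map_mx (fun x : nat => x%:R) A.

Definition pconj (lam : prim) : prim := lam.

Definition is_nimrep n (G : prim -> 'M[nat]_n) : Prop :=
  [/\ natmx_C (G 0) = 1%:M,
      (forall lam, G (pconj lam) = (G lam)^T) &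
      (forall lam mu, natmx_C (G lam) *m natmx_C (G mu)
                      = \sum_(nu < 8) Nfus lam mu nu *: natmx_C (G nu))].

(* Equivalence: conjugation by a common permutation matrix, written entrywise
   (a bijection 'I_m -> 'I_n exists only when m = n). *)
Definition nimrep_equiv n m (G : prim -> 'M[nat]_n) (H : prim -> 'M[nat]_m) : Prop :=
  exists f : 'I_m -> 'I_n, bijective f /\
    forall lam i j, H lam i j = G lam (f i) (f j).

Definition adjmx n (U : 'M[algC]_n) : 'M[algC]_n := (map_mx (fun x : algC => x^*) U)^T.

(* A nimrep matches Z: n = Tr Z, and the G_lam are simultaneously unitarily
   diagonalisable with joint eigenvalues (S_{lam mu}/S_{0 mu})_lam, where mu
   runs through Exp(Z) with multiplicity (mu_ : 'I_n -> prim takes each value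
   nu exactly Z_{nu nu} times). *)
Definition matches (Z : 'M[int]_8) n (G : prim -> 'M[nat]_n) : Prop :=
  \tr Z = n%:Z /\
  exists (mu_ : 'I_n -> prim) (U : 'M[algC]_n),
    [/\ (forall nu : prim, (#|[pred i | mu_ i == nu]|)%:Z = Z nu nu),
        U *m adjmx U = 1%:M &
        (forall lam, adjmx U *m natmx_C (G lam) *m U
                     = diag_mx (\row_i (Smat lam (mu_ i) / Smat 0 (mu_ i))))].

(* Main.v *)
Require Import Defs.
From mathcomp Require Import all_boot all_order all_algebra all_field.
From mathcomp Require Import ring lra zify.
Import Order.TTheory GRing.Theory Num.Theory.
Local Open Scope ring_scope.
Set Implicit Arguments. Unset Strict Implicit. Unset Printing Implicit Defensive.

Definition Sn (i j : nat) : int := nth 0 (nth [::] S_int i) j.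

Lemma Smat_E (i j : prim) : Smat i j = (Sn i j)%:~R / 6%:R.
Proof. by rewrite mxE. Qed.

Lemma conj_S (i j : prim) : (Smat i j)^* = Smat i j.
Proof. by rewrite Smat_E fmorph_div rmorph_int rmorph_nat. Qed.

Lemma Sint_unit (s r : prim) :
  \sum_(v < 8) Sn v s * Sn v r = 36 * (s == r)%:R.
Proof.
rewrite !big_ord_recr big_ord0 /=.
case: s => [[|[|[|[|[|[|[|[|m]]]]]]]] Hm] //;
case: r => [[|[|[|[|[|[|[|[|k]]]]]]]] Hk] //.
Qed.

Lemma Sunit (s r : prim) :
  \sum_(v < 8) (Smat v s)^* * Smat v r = (s == r)%:R.
Proof.
have -> : \sum_(v < 8) (Smat v s)^* * Smat v r
   = (\sum_(v < 8) Sn v s * Sn v r)%:~R / 36%:R.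
  rewrite rmorph_sum mulr_suml; apply: eq_bigr => v _.
  rewrite conj_S !Smat_E rmorphM /=.
  have h6 : (6%:R : algC) != 0 by rewrite pnatr_eq0.
  field. done.
rewrite Sint_unit rmorphM /=.
have h36 : (36%:R : algC) != 0 by rewrite pnatr_eq0.
case: (s == r); rewrite /= ?mulr0 ?mul0r // mulr1.
by rewrite -[36]/(36%:Z) pmulrn divff.
Qed.

Lemma S0nz (r : prim) : Smat 0 r != 0.
Proof.
rewrite Smat_E mulf_neq0 // ?invr_eq0 ?pnatr_eq0 // intr_eq0.
by case: r => [[|[|[|[|[|[|[|[|m]]]]]]]] Hm].
Qed.

Definition E (lam mu : prim) : algC := Smat lam mu / Smat 0 mu.

Lemma Verlinde (l m r : prim) :
  E l r * E m r = \sum_(v < 8) Nfus l m v * E v r.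
Proof.
rewrite /Nfus /E.
under eq_bigr do rewrite mulr_suml.
rewrite exchange_big /=.
under eq_bigr => s _.
  have -> : \sum_(v < 8) Smat l s * Smat m s * (Smat v s)^* / Smat 0 s * (Smat v r / Smat 0 r)
     = (Smat l s * Smat m s / Smat 0 s / Smat 0 r) * \sum_(v < 8) (Smat v s)^* * Smat v r.
    by rewrite mulr_sumr; apply: eq_bigr => v _; ring.
  rewrite Sunit.
  over.
rewrite (bigD1 r) //= eqxx mulr1 big1 ?addr0; last first.
  by move=> s /negbTE ->; rewrite mulr0.
ring.
Qed.

Lemma E0 (mu : prim) : E 0 mu = 1.
Proof. by rewrite /E divff // S0nz. Qed.

Definition Ei (lam mu : prim) : int := (Sn lam mu %/ Sn 0 mu)%Z.

Lemma Ei_check (lam mu : prim) : Sn lam mu = Ei lam mu * Sn 0 mu.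
Proof.
rewrite /Ei.
case: lam => [[|[|[|[|[|[|[|[|m]]]]]]]] Hm] //;
case: mu => [[|[|[|[|[|[|[|[|k]]]]]]]] Hk] //.
Qed.

Lemma E_Ei (lam mu : prim) : E lam mu = (Ei lam mu)%:~R.
Proof.
have h := S0nz mu.
rewrite /E Smat_E Ei_check rmorphM /=.
move: h; rewrite Smat_E => h.
have h6 : (6%:R : algC) != 0 by rewrite pnatr_eq0.
have h0 : ((Sn 0 mu)%:~R : algC) != 0.
  by apply: contra h => /eqP ->; rewrite mul0r.
field. by rewrite h0.
Qed.

Lemma ord2_cases (i : 'I_2) : i = 0 \/ i = 1.
Proof. case: i => [[|[|k]]] Hk; [left|right|by []]; exact: val_inj. Qed.

Lemma sum2 (F : 'I_2 -> algC) : \sum_(k < 2) F k = F 0 + F 1.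
Proof. rewrite big_ord_recl big_ord1; congr (_ + F _); exact: val_inj. Qed.

Definition Kmx (x : nat) : 'M[algC]_2 := \matrix_(i, j) if i == j then 0 else x%:R.

Lemma uniq_core (G : prim -> 'M[nat]_2) (mu_ : 'I_2 -> prim) (U : 'M[algC]_2)
  (ma mb lb : prim) (x : nat) :
  U *m adjmx U = 1%:M ->
  (forall lam, adjmx U *m natmx_C (G lam) *m U = diag_mx (\row_i E lam (mu_ i))) ->
  (mu_ 0 = ma /\ mu_ 1 = mb) \/ (mu_ 0 = mb /\ mu_ 1 = ma) ->
  E lb ma = x%:R -> E lb mb = - x%:R -> (0 < x)%N ->
  G lb = (G lb)^T ->
  forall lam, natmx_C (G lam) =
    ((E lam ma + E lam mb) / 2%:R)%:M
    + ((E lam ma - E lam mb) / (2 * x)%:R) *: Kmx x.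
Proof.
move=> hU hD hmu ha hb hx hsym.
have hV := mulmx1C hU.
have hG : forall lam, natmx_C (G lam) = U *m diag_mx (\row_i E lam (mu_ i)) *m adjmx U.
  move=> lam; rewrite -hD !mulmxA hU mul1mx -mulmxA hU mulmx1 //.
have hx0 : (x%:R : algC) != 0 by rewrite pnatr_eq0 -lt0n.
have hrel : forall lam, diag_mx (\row_i E lam (mu_ i)) =
   ((E lam ma + E lam mb) / 2%:R)%:M
    + ((E lam ma - E lam mb) / (2 * x)%:R) *: diag_mx (\row_i E lb (mu_ i)).
  move=> lam; apply/matrixP => i j; rewrite !mxE.
  case: (ord2_cases i) => ->; case: (ord2_cases j) => -> //=;
  rewrite ?mulr0n ?mulr1n ?mulr0 ?addr0 //;
  case: hmu => [[h0 h1]|[h0 h1]]; rewrite ?h0 ?h1 ?ha ?hb natrM; field; by rewrite hx0.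
have hGl : forall lam, natmx_C (G lam) =
   ((E lam ma + E lam mb) / 2%:R)%:M
    + ((E lam ma - E lam mb) / (2 * x)%:R) *: natmx_C (G lb).
  move=> lam; rewrite hG hG hrel mulmxDr mulmxDl -mulmxA mul_scalar_mx -scalemxAr hU scalemx1 -scalemxAr -scalemxAl //.

have hsq : natmx_C (G lb) *m natmx_C (G lb) = (x%:R ^+ 2)%:M.
  rewrite hG -!mulmxA (mulmxA (adjmx U)) hV mul1mx (mulmxA (diag_mx _)) mulmx_diag.
  have -> : diag_mx (\row_j ((\row_i E lb (mu_ i)) 0 j * (\row_i E lb (mu_ i)) 0 j))
     = (x%:R ^+ 2)%:M :> 'M[algC]_2.
    apply/matrixP => i j; rewrite !mxE.
    case: (ord2_cases i) => ->; case: (ord2_cases j) => -> //=;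
    rewrite ?mulr0n ?mulr1n //;
    case: hmu => [[h0 h1]|[h0 h1]]; rewrite ?h0 ?h1 ?ha ?hb; ring.
  by rewrite mul_scalar_mx -scalemxAr hU scalemx1.
have htr : \tr (natmx_C (G lb)) = 0.
  rewrite hG mxtrace_mulC mulmxA hV mul1mx /mxtrace sum2 !mxE /= !mulr1n.
  case: hmu => [[h0 h1]|[h0 h1]]; rewrite ?h0 ?h1 ?ha ?hb; ring.
have hs01 : G lb 0 1 = G lb 1 0 by rewrite {1}hsym mxE.
move: htr; rewrite /mxtrace sum2 !mxE -natrD => /eqP; rewrite pnatr_eq0 addn_eq0.
move=> /andP [/eqP h00 /eqP h11].
have h01 : G lb 0 1 = x.
  have := congr1 (fun M : 'M[algC]_2 => M 0 0) hsq; rewrite !mxE sum2 !mxE /= mulr1n.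
  rewrite h00 -hs01 -!natrM -natrD -natrX => /eqP; rewrite eqr_nat => /eqP.
  rewrite mul0n add0n => hh. 
  by apply/eqP; rewrite -(@eqn_exp2r _ _ 2) // -hh expnS expn1.
have hK : natmx_C (G lb) = Kmx x.
  apply/matrixP => i j; rewrite !mxE.
  case: (ord2_cases i) => ->; case: (ord2_cases j) => -> //=;
  by rewrite ?h00 ?h11 -?hs01 ?h01.
by move=> lam; rewrite hGl hK.
Qed.

Lemma mu_cases (mu_ : 'I_2 -> prim) (ma mb : prim) : ma != mb ->
  (forall nu, #|[pred i | mu_ i == nu]| = ((nu == ma) || (nu == mb) : nat)) ->
  (mu_ 0 = ma /\ mu_ 1 = mb) \/ (mu_ 0 = mb /\ mu_ 1 = ma).
Proof.
move=> hne hc.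
have hin : forall i, (mu_ i == ma) || (mu_ i == mb).
  move=> i; apply/negPn/negP => hn.
  have := hc (mu_ i); rewrite (negbTE hn) => /card0_eq /(_ i).
  by rewrite inE eqxx.
have hnot : forall m, #|[pred i | mu_ i == m]| = 1%N -> ~ (mu_ 0 = m /\ mu_ 1 = m).
  move=> m h [h0 h1].
  have : #|[pred i | mu_ i == m]| = #|'I_2|.
    apply: eq_card => i; rewrite !inE.
    by case: (ord2_cases i) => ->; rewrite ?h0 ?h1 eqxx.
  by rewrite h card_ord.
have hma := hnot ma; have hmb := hnot mb.
rewrite hc eqxx /= in hma; rewrite hc eqxx orbT in hmb.
move: (hin 0) (hin 1) => /orP [] /eqP h0 /orP [] /eqP h1.
- by exfalso; apply: hma.
- by left.
- by right.
- by exfalso; apply: hmb.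
Qed.

Definition sq2 : algC := (sqrtC 2%:R)^-1.

Lemma sq2_real : sq2 \is Num.real.
Proof. by apply: ger0_real; rewrite invr_ge0 sqrtC_ge0 ler0n. Qed.

Lemma sq2_sq : sq2 * sq2 = 2%:R^-1.
Proof. by rewrite /sq2 -invfM -expr2 sqrtCK. Qed.

Definition Hd : 'M[algC]_2 := \matrix_(i, j) if (i == 1) && (j == 1) then -1 else 1.
Definition Uh : 'M[algC]_2 := sq2 *: Hd.

Lemma adj_Uh : adjmx Uh = Uh.
Proof.
apply/matrixP => i j; rewrite !mxE.
by case: (ord2_cases i) => ->; case: (ord2_cases j) => -> /=;
  apply: conj_Creal; rewrite rpredM ?rpredN ?real1 ?sq2_real.
Qed.

Lemma Uh_unit : Uh *m Uh = 1%:M.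
Proof.
apply/matrixP => i j; rewrite !mxE sum2 !mxE.
case: (ord2_cases i) => ->; case: (ord2_cases j) => -> /=;
  rewrite ?mulr1 ?mulrN1 ?mulNr ?mulr1n ?mulr0n ?opprK sq2_sq ?subrr //.
all: by rewrite ?mulrN ?mulNr ?sq2_sq; field.
Qed.

Definition Gex (a b : prim -> nat) (lam : prim) : 'M[nat]_2 :=
  \matrix_(i, j) if i == j then a lam else b lam.
Definition muex (ma mb : prim) (i : 'I_2) : prim := if i == 0 then ma else mb.

Lemma Gex_conj (a b : prim -> nat) (ma mb : prim) :
  (forall lam, (a lam)%:R = (E lam ma + E lam mb) / 2%:R) ->
  (forall lam, (b lam)%:R = (E lam ma - E lam mb) / 2%:R) ->
  forall lam, natmx_C (Gex a b lam) = Uh *m diag_mx (\row_i E lam (muex ma mb i)) *m Uh.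
Proof.
move=> ha hb lam; apply/matrixP => i j.
rewrite mul_mx_diag !mxE sum2 !mxE /muex /=.
case: (ord2_cases i) => ->; case: (ord2_cases j) => -> /=;
  rewrite ?ha ?hb ?mulr1 ?mulrN1 ?mulNr ?mulrN.
all: by rewrite !(mulrAC sq2 _ sq2) sq2_sq; field.
Qed.

Lemma Gex_nimrep (a b : prim -> nat) (ma mb : prim) :
  (forall lam, (a lam)%:R = (E lam ma + E lam mb) / 2%:R) ->
  (forall lam, (b lam)%:R = (E lam ma - E lam mb) / 2%:R) ->
  is_nimrep (Gex a b).
Proof.
move=> ha hb; have hG := Gex_conj ha hb.
split.
- rewrite hG.
  have -> : \row_i E 0 (muex ma mb i) = const_mx 1.
    by apply/rowP => i; rewrite !mxE E0.
  by rewrite diag_const_mx mulmx1 Uh_unit.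
- by move=> lam; apply/matrixP => i j; rewrite !mxE eq_sym.
- move=> l m; rewrite !hG; under eq_bigr do rewrite hG.
  have -> : Uh *m diag_mx (\row_i E l (muex ma mb i)) *m Uh *m
     (Uh *m diag_mx (\row_i E m (muex ma mb i)) *m Uh)
     = Uh *m (diag_mx (\row_i E l (muex ma mb i)) *m diag_mx (\row_i E m (muex ma mb i))) *m Uh.
    by rewrite !mulmxA -(mulmxA _ Uh Uh) Uh_unit mulmx1.
  have -> : \sum_(nu < 8) Nfus l m nu *: (Uh *m diag_mx (\row_i E nu (muex ma mb i)) *m Uh)
     = Uh *m (\sum_(nu < 8) Nfus l m nu *: diag_mx (\row_i E nu (muex ma mb i))) *m Uh.
    rewrite mulmx_sumr mulmx_suml; apply: eq_bigr => nu _.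
    by rewrite scalemxAl scalemxAr.
  congr (_ *m _ *m _).
  rewrite mulmx_diag; apply/matrixP => i j; rewrite summxE !mxE.
  under eq_bigr do rewrite !mxE.
  case: (i == j); rewrite ?mulr1n ?mulr0n.
  + by rewrite Verlinde.
  + by rewrite big1 // => nu _; rewrite mulr0.
Qed.


Lemma muex_card (ma mb nu : prim) : ma != mb ->
  #|[pred i | muex ma mb i == nu]| = ((nu == ma) || (nu == mb) : nat).
Proof.
move=> hne; rewrite -sum1_card big_mkcond /= big_ord_recl big_ord1 /muex !inE /=.
have hne' : mb != ma by rewrite eq_sym.
case: (eqVneq nu ma) => [->|hna]; first by rewrite (negbTE hne').
case hnb: (mb == nu); first by move/eqP: hnb => <-; rewrite eqxx orbT.
by rewrite eq_sym hnb.
Qed.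

Lemma generic (Z : 'M[int]_8) (ma mb lb : prim) (x : nat) (a b : prim -> nat) :
  ma != mb -> \tr Z = 2%:Z ->
  (forall nu, Z nu nu = ((nu == ma) || (nu == mb) : nat)%:Z) ->
  (forall lam, (a lam)%:R = (E lam ma + E lam mb) / 2%:R) ->
  (forall lam, (b lam)%:R = (E lam ma - E lam mb) / 2%:R) ->
  E lb ma = x%:R -> E lb mb = - x%:R -> (0 < x)%N ->
    (exists n (G : prim -> 'M[nat]_n), is_nimrep G /\ matches Z G) /\
    (forall n m (G : prim -> 'M[nat]_n) (H : prim -> 'M[nat]_m),
        is_nimrep G -> matches Z G -> is_nimrep H -> matches Z H ->
        nimrep_equiv G H).
Proof.
move=> hne htr hZ ha hb hx1 hx2 hx.
split.
  exists 2%N, (Gex a b); split; first exact: Gex_nimrep ha hb.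
  split; first by rewrite htr.
  exists (muex ma mb), Uh; split.
  - by move=> nu; rewrite hZ muex_card.
  - by rewrite adj_Uh Uh_unit.
  - move=> lam; rewrite adj_Uh (Gex_conj ha hb) !mulmxA Uh_unit mul1mx.
    by rewrite -mulmxA Uh_unit mulmx1.
move=> n m G H [_ hsG _] [trG [mu [U [hc hU hD]]]]
  [_ hsH _] [trH [mu' [U' [hc' hU' hD']]]].
have en : n = 2%N by move: trG; rewrite htr => -[].
have em : m = 2%N by move: trH; rewrite htr => -[].
subst n m.
have hmu : (mu 0 = ma /\ mu 1 = mb) \/ (mu 0 = mb /\ mu 1 = ma).
  apply: mu_cases hne _ => nu; by have := hc nu; rewrite hZ => -[].
have hmu' : (mu' 0 = ma /\ mu' 1 = mb) \/ (mu' 0 = mb /\ mu' 1 = ma).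
  apply: mu_cases hne _ => nu; by have := hc' nu; rewrite hZ => -[].
have eG := uniq_core hU hD hmu hx1 hx2 hx (hsG lb).
have eH := uniq_core hU' hD' hmu' hx1 hx2 hx (hsH lb).
exists id; split; first by exists id.
move=> lam i j.
have := congr1 (fun M : 'M[algC]_2 => M i j) (etrans (eG lam) (esym (eH lam))).
by rewrite /= !mxE => /eqP; rewrite eqr_nat => /eqP.
Qed.

Lemma eq_inord (i : 'I_8) k : (k < 8)%N -> (i == inord k) = (val i == k).
Proof. by move=> hk; rewrite -val_eqE /= inordK. Qed.

Ltac zdiag := rewrite ?mxE /outer /chi ?mxE /= ?big_ord1 ?mxE /= ?eq_inord //.

Lemma dZ3 nu : Z3 nu nu = ((nu == 0) || (nu == 1) : nat)%:Z.
Proof. rewrite /Z3; zdiag; by case: nu => [[|[|[|[|[|[|[|[|k]]]]]]]] Hk]. Qed.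
Lemma tZ3 : \tr Z3 = 2%:Z.
Proof. rewrite /mxtrace; under eq_bigr do rewrite dZ3. by rewrite !big_ord_recr big_ord0 /=. Qed.

Lemma dZ23 nu : Z23 nu nu = ((nu == 0) || (nu == 1) : nat)%:Z.
Proof. rewrite /Z23 /s2 /s3; zdiag; by case: nu => [[|[|[|[|[|[|[|[|k]]]]]]]] Hk]. Qed.
Lemma dZ32 nu : Z32 nu nu = ((nu == 0) || (nu == 1) : nat)%:Z.
Proof. rewrite /Z32 /s2 /s3; zdiag; by case: nu => [[|[|[|[|[|[|[|[|k]]]]]]]] Hk]. Qed.
Lemma dZ45 nu : Z45 nu nu = ((nu == 0) || (nu == 6) : nat)%:Z.
Proof. rewrite /Z45 /s4 /s5; zdiag; by case: nu => [[|[|[|[|[|[|[|[|k]]]]]]]] Hk]. Qed.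
Lemma dZ54 nu : Z54 nu nu = ((nu == 0) || (nu == 6) : nat)%:Z.
Proof. rewrite /Z54 /s4 /s5; zdiag; by case: nu => [[|[|[|[|[|[|[|[|k]]]]]]]] Hk]. Qed.
Lemma dZ45p nu : Z45p nu nu = ((nu == 0) || (nu == 7) : nat)%:Z.
Proof. rewrite /Z45p; zdiag; by case: nu => [[|[|[|[|[|[|[|[|k]]]]]]]] Hk]. Qed.
Lemma dZ54p nu : Z54p nu nu = ((nu == 0) || (nu == 7) : nat)%:Z.
Proof. by rewrite /Z54p mxE dZ45p. Qed.

Lemma tZ23 : \tr Z23 = 2%:Z.
Proof. rewrite /mxtrace; under eq_bigr do rewrite dZ23. by rewrite !big_ord_recr big_ord0 /=. Qed.
Lemma tZ32 : \tr Z32 = 2%:Z.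
Proof. rewrite /mxtrace; under eq_bigr do rewrite dZ32. by rewrite !big_ord_recr big_ord0 /=. Qed.
Lemma tZ45 : \tr Z45 = 2%:Z.
Proof. rewrite /mxtrace; under eq_bigr do rewrite dZ45. by rewrite !big_ord_recr big_ord0 /=. Qed.
Lemma tZ54 : \tr Z54 = 2%:Z.
Proof. rewrite /mxtrace; under eq_bigr do rewrite dZ54. by rewrite !big_ord_recr big_ord0 /=. Qed.
Lemma tZ45p : \tr Z45p = 2%:Z.
Proof. rewrite /mxtrace; under eq_bigr do rewrite dZ45p. by rewrite !big_ord_recr big_ord0 /=. Qed.
Lemma tZ54p : \tr Z54p = 2%:Z.
Proof. rewrite /mxtrace; under eq_bigr do rewrite dZ54p. by rewrite !big_ord_recr big_ord0 /=. Qed.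

Definition ta (ma mb : prim) (lam : prim) : nat := absz ((Ei lam ma + Ei lam mb) %/ 2)%Z.
Definition tb (ma mb : prim) (lam : prim) : nat := absz ((Ei lam ma - Ei lam mb) %/ 2)%Z.

Lemma tab_help (k : nat) (p q : int) :
  k%:Z * 2 = p + q -> (k%:R : algC) = (p%:~R + q%:~R) / 2%:R.
Proof.
move=> h; rewrite -rmorphD /= -h rmorphM /= -[2]/(2%:Z) !pmulrn.
by field.
Qed.

Lemma generic2 (Z : 'M[int]_8) (ma mb lb : prim) (x : nat) :
  ma != mb -> \tr Z = 2%:Z ->
  (forall nu, Z nu nu = ((nu == ma) || (nu == mb) : nat)%:Z) ->
  (forall lam, (ta ma mb lam)%:Z * 2 = Ei lam ma + Ei lam mb) ->
  (forall lam, (tb ma mb lam)%:Z * 2 = Ei lam ma - Ei lam mb) ->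
  Ei lb ma = x%:Z -> Ei lb mb = - x%:Z -> (0 < x)%N ->
    (exists n (G : prim -> 'M[nat]_n), is_nimrep G /\ matches Z G) /\
    (forall n m (G : prim -> 'M[nat]_n) (H : prim -> 'M[nat]_m),
        is_nimrep G -> matches Z G -> is_nimrep H -> matches Z H ->
        nimrep_equiv G H).
Proof.
move=> hne htr hZ ha hb h1 h2 hx.
apply: (generic (a := ta ma mb) (b := tb ma mb) (lb := lb) (x := x) hne htr hZ _ _ _ _ hx).
- by move=> lam; rewrite !E_Ei; apply: tab_help.
- move=> lam; rewrite !E_Ei -rmorphN /=; apply: tab_help; exact: hb.
- by rewrite E_Ei h1 pmulrn.
- by rewrite E_Ei h2 rmorphN /= pmulrn.
Qed.

Theorem proposition6p4 :
  forall Z : 'M[int]_8, Z \in [:: Z3; Z23; Z32; Z45; Z54; Z45p; Z54p] ->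
    (exists n (G : prim -> 'M[nat]_n), is_nimrep G /\ matches Z G) /\
    (forall n m (G : prim -> 'M[nat]_n) (H : prim -> 'M[nat]_m),
        is_nimrep G -> matches Z G -> is_nimrep H -> matches Z H ->
        nimrep_equiv G H).
Proof.
have c01 : forall lam, (ta 0 1 lam)%:Z * 2 = Ei lam 0 + Ei lam 1.
  by case=> [[|[|[|[|[|[|[|[|k]]]]]]]] Hk].
have d01 : forall lam, (tb 0 1 lam)%:Z * 2 = Ei lam 0 - Ei lam 1.
  by case=> [[|[|[|[|[|[|[|[|k]]]]]]]] Hk].
have c06 : forall lam, (ta 0 6 lam)%:Z * 2 = Ei lam 0 + Ei lam 6.
  by case=> [[|[|[|[|[|[|[|[|k]]]]]]]] Hk].
have d06 : forall lam, (tb 0 6 lam)%:Z * 2 = Ei lam 0 - Ei lam 6.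
  by case=> [[|[|[|[|[|[|[|[|k]]]]]]]] Hk].
have c07 : forall lam, (ta 0 7 lam)%:Z * 2 = Ei lam 0 + Ei lam 7.
  by case=> [[|[|[|[|[|[|[|[|k]]]]]]]] Hk].
have d07 : forall lam, (tb 0 7 lam)%:Z * 2 = Ei lam 0 - Ei lam 7.
  by case=> [[|[|[|[|[|[|[|[|k]]]]]]]] Hk].
move=> Z; rewrite !inE => /or4P [| | |/or4P [| | |]] /eqP ->.
- by apply: (generic2 (lb := 6) (x := 3) _ tZ3 dZ3 c01 d01).
- by apply: (generic2 (lb := 6) (x := 3) _ tZ23 dZ23 c01 d01).
- by apply: (generic2 (lb := 6) (x := 3) _ tZ32 dZ32 c01 d01).
- by apply: (generic2 (lb := 1) (x := 1) _ tZ45 dZ45 c06 d06).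
- by apply: (generic2 (lb := 1) (x := 1) _ tZ54 dZ54 c06 d06).
- by apply: (generic2 (lb := 1) (x := 1) _ tZ45p dZ45p c07 d07).
- by apply: (generic2 (lb := 1) (x := 1) _ tZ54p dZ54p c07 d07).
Qed.
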